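(* There is no algorithm which, given a propositional Hilbert-type calculus $\mathbf{C}$ and a finite-valued logic $\mathbf{M}$ over the same language, decides whether $\mathbf{C}$ is weakly sound for $\mathbf{M}$, i.e., whether $\mathrm{Thm}(\mathbf{C})\subseteq\mathrm{Taut}(\mathbf{M})$.
   Context: A propositional language has variables $X_1,X_2,\ldots$ and finitely many connectives with arities (0-ary ones are constants). A substitution maps variables to formulas; $F\sigma$ is the result of simultaneously replacing each variable $X$ in $F$ by $\sigma(X)$. A propositional Hilbert-type calculus $\mathbf{C}$ is given by a finite set of axioms (formulas) and a finite set of rules, each consisting of premises $A_1,\ldots,A_n$ and a conclusion $C$ (formulas). A derivation is a finite sequence $F_1,\ldots,F_s$ in which each $F_i$ is either $A\sigma$ for an axiom $A$ and substitution $\sigma$, or $C\sigma$ for a rule with premises $A_1,\ldots,A_n$ and conclusion $C$ and a substitution $\sigma$ such that each $A_j\sigma$ occurs earlier in the sequence. $\mathrm{Thm}(\mathbf{C})$ is the set of formulas having a derivation. A finite-valued logic $\mathbf{M}$ is given by a finite set $V(\mathbf{M})$ of truth values, designated values $V^+(\mathbf{M})\subseteq V(\mathbf{M})$, and a truth function for each connective; valuations map variables to truth values and extend to formulas; a tautology is a formula designated under every valuation, and $\mathrm{Taut}(\mathbf{M})$ is the set of tautologies. *)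

(* Defs.v *)
From Stdlib Require Import Arith List Lia.
Import ListNotations.

(* A language is the list of arities of its finitely many connectives;
   connective number k has arity [nth k L 0]. *)
Definition language := list nat.

(* Variables X_1, X_2, ... are represented by Var 0, Var 1, ... *)
Inductive form : Type :=
| Var (x : nat)
| App (k : nat) (args : list form).

Fixpoint wf_form (L : language) (F : form) : Prop :=
  match F with
  | Var _ => True
  | App k args =>
      k < length L /\ length args = nth k L 0 /\
      (fix all (l : list form) : Prop :=
         match l with nil => True | a :: l' => wf_form L a /\ all l' end) args
  end.

Fixpoint subst (s : nat -> form) (F : form) : form :=
  match F with
  | Var x => s x
  | App k args =>
      App k ((fix mp (l : list form) : list form :=
                match l with nil => nil | a :: l' => subst s a :: mp l' end) args)
  end.

Definition subst_ok (L : language) (s : nat -> form) : Prop :=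
  forall x, wf_form L (s x).

Record calculus := Calculus {
  axioms : list form;
  rules  : list (list form * form)
}.

Definition wf_calculus (L : language) (C : calculus) : Prop :=
  (forall A, In A (axioms C) -> wf_form L A) /\
  (forall prem concl, In (prem, concl) (rules C) ->
     wf_form L concl /\ forall A, In A prem -> wf_form L A).

Definition is_derivation (L : language) (C : calculus) (s : list form) : Prop :=
  forall i, i < length s ->
    (exists A sg, In A (axioms C) /\ subst_ok L sg /\
                  nth i s (Var 0) = subst sg A) \/
    (exists prem concl sg, In (prem, concl) (rules C) /\ subst_ok L sg /\
                  nth i s (Var 0) = subst sg concl /\
                  forall A, In A prem -> In (subst sg A) (firstn i s)).

Definition Thm (L : language) (C : calculus) (F : form) : Prop :=
  exists s, is_derivation L C (s ++ [F]).

(* Truth values are 0, ..., nvals-1; designated values are listed in [desig];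
   the truth function of connective k is given by the table [nth k tables []],
   listing its values on argument tuples (a_1,...,a_m) in the order of the
   base-nvals number a_1 a_2 ... a_m. *)
Record fvlogic := FVLogic {
  nvals  : nat;
  desig  : list nat;
  tables : list (list nat)
}.

Definition wf_fvlogic (L : language) (M : fvlogic) : Prop :=
  0 < nvals M /\
  (forall d, In d (desig M) -> d < nvals M) /\
  length (tables M) = length L /\
  (forall k, k < length L ->
     length (nth k (tables M) []) = Nat.pow (nvals M) (nth k L 0) /\
     forall y, In y (nth k (tables M) []) -> y < nvals M).

Definition tuple_index (n : nat) (vs : list nat) : nat :=
  fold_left (fun acc x => acc * n + x) vs 0.

Fixpoint eval (M : fvlogic) (v : nat -> nat) (F : form) : nat :=
  match F with
  | Var x => v x
  | App k args =>
      nth (tuple_index (nvals M)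
             ((fix mp (l : list form) : list nat :=
                 match l with nil => nil | a :: l' => eval M v a :: mp l' end) args))
          (nth k (tables M) []) 0
  end.

Definition Taut (M : fvlogic) (F : form) : Prop :=
  forall v : nat -> nat, (forall x, v x < nvals M) -> In (eval M v F) (desig M).

Definition weakly_sound (L : language) (C : calculus) (M : fvlogic) : Prop :=
  forall F, Thm L C F -> Taut M F.

Definition cpair (a b : nat) : nat := (a + b) * (a + b + 1) / 2 + b.

Fixpoint code_list (l : list nat) : nat :=
  match l with nil => 0 | x :: l' => S (cpair x (code_list l')) end.

Fixpoint code_form (F : form) : nat :=
  match F with
  | Var x => cpair 0 x
  | App k args =>
      cpair (S k) (code_list
        ((fix mp (l : list form) : list nat :=
            match l with nil => nil | a :: l' => code_form a :: mp l' end) args))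
  end.

Definition code_rule (r : list form * form) : nat :=
  cpair (code_list (map code_form (fst r))) (code_form (snd r)).

Definition code_calculus (C : calculus) : nat :=
  cpair (code_list (map code_form (axioms C))) (code_list (map code_rule (rules C))).

Definition code_fvlogic (M : fvlogic) : nat :=
  cpair (nvals M) (cpair (code_list (desig M)) (code_list (map code_list (tables M)))).

Definition code_instance (L : language) (C : calculus) (M : fvlogic) : nat :=
  cpair (code_list L) (cpair (code_calculus C) (code_fvlogic M)).

Inductive instr :=
| INC (r : nat)
| DEC (r : nat) (j : nat).

Definition program := list instr.

Definition mstate := (nat * (nat -> nat))%type.

Definition upd (g : nat -> nat) (r v : nat) : nat -> nat :=
  fun x => if Nat.eqb x r then v else g x.

Definition step (P : program) (st : mstate) : mstate :=
  let (pc, g) := st in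
  match nth_error P pc with
  | None => st
  | Some (INC r) => (S pc, upd g r (S (g r)))
  | Some (DEC r j) =>
      match g r with
      | 0 => (j, g)
      | S m => (S pc, upd g r m)
      end
  end.

Fixpoint run (P : program) (k : nat) (st : mstate) : mstate :=
  match k with 0 => st | S k' => run P k' (step P st) end.

Definition halted (P : program) (st : mstate) : Prop := length P <= fst st.

Definition computes (P : program) (n m : nat) : Prop :=
  exists k, let st := run P k (0, fun r => if Nat.eqb r 0 then n else 0) in
            halted P st /\ snd st 0 = m.

(* Main.v *)
Require Import Defs.
From Stdlib Require Import Arith List Lia.
Import ListNotations.
Arguments cpair : simpl never.


Definition z : form := App 0 [].
Definition sc (t : form) : form := App 1 [t].
Definition num (n : nat) : form := Nat.iter n sc z.
Definition rnil : form := App 2 [].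
Definition rcons (x r : form) : form := App 3 [x; r].
Definition fadd (a b c : form) : form := App 4 [a; b; c].
Definition ftri (n t : form) : form := App 5 [n; t].
Definition fcp (a b c : form) : form := App 6 [a; b; c].
Definition fnc (x c : form) : form := App 7 [x; c].
Definition fdata (a b c d : form) : form := App 8 [a; b; c; d].
Definition fst_ (p r : form) : form := App 9 [p; r].
Definition fhlt (x : form) : form := App 10 [x].
Definition fbad : form := App 11 [].
Definition V := Var.

Fixpoint val (F : form) : nat :=
  match F with App 1 (t :: nil) => S (val t) | _ => 0 end.

Fixpoint rnth (r : form) (i : nat) : form :=
  match r with
  | App 3 (x :: r' :: nil) => match i with 0 => x | S i' => rnth r' i' end
  | _ => z end.

Definition regs_of (l : list form) : form := fold_right rcons rnil l.

Definition L0 : language := [0;1;0;2;3;2;3;2;4;2;1;0].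
Definition M0 : fvlogic := FVLogic 2 [0]
  [repeat 0 1; repeat 0 2; repeat 0 1; repeat 0 4; repeat 0 8; repeat 0 4;
   repeat 0 8; repeat 0 4; repeat 0 16; repeat 0 4; repeat 0 2; [1]].

Definition ireg (i : instr) : nat := match i with INC r => r | DEC r _ => r end.
Definition R (P : program) : nat := S (fold_right (fun ins m => Nat.max (ireg ins) m) 0 P).

Definition patf (P : program) (f : nat -> form) : form := regs_of (map f (seq 0 (R P))).
Definition pat_id P := patf P V.
Definition pat_inc P r := patf P (fun j => if j =? r then sc (V j) else V j).
Definition pat_z P r := patf P (fun j => if j =? r then z else V j).

Definition irules (P : program) (i : nat) : list (list form * form) :=
  match nth_error P i with
  | Some (INC r) => [([fst_ (num i) (pat_id P)], fst_ (num (S i)) (pat_inc P r))]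
  | Some (DEC r j) => [([fst_ (num i) (pat_z P r)], fst_ (num j) (pat_z P r));
                       ([fst_ (num i) (pat_inc P r)], fst_ (num (S i)) (pat_id P))]
  | None => []
  end.
Definition instr_rules P := flat_map (irules P) (seq 0 (length P)).

Definition others (P : program) : list form :=
  [fadd z (V 0) (V 0); ftri z z; fnc z (num (cpair 1 0));
   fhlt (Nat.iter (length P) sc (V 0))].

Definition r_add := ([fadd (V 0) (V 1) (V 2)], fadd (sc (V 0)) (V 1) (sc (V 2))).
Definition r_tri := ([ftri (V 0) (V 1); fadd (V 1) (sc (V 0)) (V 2)], ftri (sc (V 0)) (V 2)).
Definition r_cp := ([fadd (V 0) (V 1) (V 2); ftri (V 2) (V 3); fadd (V 3) (V 1) (V 4)],
                    fcp (V 0) (V 1) (V 4)).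
Definition r_nc := ([fnc (V 0) (V 1); fcp (V 1) z (V 2); fcp (num 2) (sc (V 2)) (V 3)],
                    fnc (sc (V 0)) (V 3)).
Definition start_prem : list form :=
  [fdata (V 0) (V 1) (V 2) (V 3);
   fnc (V 0) (V 4); fnc (V 1) (V 5); fnc (V 2) (V 6); fnc (V 3) (V 7);
   fcp (V 7) z (V 8);
   fcp (V 6) (sc (V 8)) (V 9);
   fcp (V 5) (sc (V 9)) (V 10);
   fcp (V 4) (sc (V 10)) (V 11);
   fcp (num 9) (sc (V 11)) (V 12);
   fcp (V 12) (V 1) (V 13);
   fcp (sc (V 13)) (V 2) (V 14);
   fcp (V 14) (V 3) (V 15);
   fcp (V 0) (V 15) (V 16)].
Definition r_start P := (start_prem, fst_ z (regs_of (V 16 :: repeat z (R P - 1)))).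
Definition r_bad := ([fst_ (V 0) (rcons (sc z) (V 1)); fhlt (V 0)], fbad).

Definition crules P := r_add :: r_tri :: r_cp :: r_nc :: r_start P :: r_bad :: instr_rules P.

Definition a0 := code_list L0.
Definition b0 P := code_list (map code_form (others P)).
Definition c0 P := code_list (map code_rule (crules P)).
Definition d0 := code_fvlogic M0.
Definition D P := fdata (num a0) (num (b0 P)) (num (c0 P)) (num d0).
Definition C0 P := Calculus (D P :: others P) (crules P).
Definition cI P := code_instance L0 (C0 P) M0.

Definition st0 (n : nat) : mstate := (0, fun r => if Nat.eqb r 0 then n else 0).

Definition good (P : program) (F : form) : Prop :=
  match F with
  | App 4 [a; b; c] => val a + val b = val c
  | App 5 [n; t] => val t = val n * (val n + 1) / 2
  | App 6 [a; b; c] => val c = cpair (val a) (val b)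
  | App 7 [x; c] => val c = code_form x
  | App 8 [a; b; c; d] => App 8 [a; b; c; d] = D P
  | App 9 [p; r] => exists k, fst (run P k (st0 (cI P))) = val p /\
        forall i, i < R P -> snd (run P k (st0 (cI P))) i = val (rnth r i)
  | App 10 [x] => length P <= val x
  | App 11 _ => computes P (cI P) 1
  | _ => False
  end.

Lemma subst_iter sg n t : subst sg (Nat.iter n sc t) = Nat.iter n sc (subst sg t).
Proof. induction n; [reflexivity|]. change (Nat.iter (S n) sc t) with (sc (Nat.iter n sc t)). unfold sc at 1. simpl. rewrite IHn. reflexivity. Qed.
Lemma subst_num sg n : subst sg (num n) = num n.
Proof. unfold num. rewrite subst_iter. reflexivity. Qed.
Lemma val_iter n t : val (Nat.iter n sc t) = n + val t.
Proof. induction n; simpl; auto. Qed.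
Lemma val_num n : val (num n) = n.
Proof. unfold num; rewrite val_iter; simpl; lia. Qed.
Lemma subst_regs sg l : subst sg (regs_of l) = regs_of (map (subst sg) l).
Proof. induction l; simpl; auto. unfold rcons at 1; simpl. now rewrite IHl. Qed.
Lemma rnth_regs l j : rnth (regs_of l) j = nth j l z.
Proof. revert j; induction l; intros [|j]; simpl; auto. Qed.
Lemma nth_map_seq (f : nat -> form) n j : j < n -> nth j (map f (seq 0 n)) z = f j.
Proof.
  intro H. rewrite nth_indep with (d' := f 0) by (rewrite length_map, length_seq; lia).
  rewrite map_nth, seq_nth by lia. reflexivity.
Qed.
Lemma num_S n : num (S n) = sc (num n).
Proof. reflexivity. Qed.

Lemma code_form_App k args : code_form (App k args) = cpair (S k) (code_list (map code_form args)).
Proof.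
  simpl. f_equal.
Qed.

Lemma code_D P : code_form (D P) = cpair 9 (S (cpair (code_form (num a0))
  (S (cpair (code_form (num (b0 P))) (S (cpair (code_form (num (c0 P)))
  (S (cpair (code_form (num d0)) 0)))))))).
Proof. unfold D, fdata. rewrite code_form_App. apply f_equal. exact eq_refl. Qed.

Lemma cI_eq P : cI P = cpair a0 (cpair (cpair (S (cpair (code_form (D P)) (b0 P))) (c0 P)) d0).
Proof. unfold cI, code_instance. apply f_equal2; [exact eq_refl|].
  apply f_equal2; [|exact eq_refl]. unfold code_calculus.
  apply f_equal2; [|exact eq_refl]. exact eq_refl. Qed.



Lemma cpair_def a b : cpair a b = (a + b) * (a + b + 1) / 2 + b.
Proof. reflexivity. Qed.
Definition nth_arg i (F : form) := match F with App _ args => nth i args z | _ => z end.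
Lemma D_eq P : D P = App 8 [num a0; num (b0 P); num (c0 P); num d0].
Proof. reflexivity. Qed.

Lemma cI_def P : cI P = code_instance L0 (C0 P) M0.
Proof. unfold cI. reflexivity. Qed.


Opaque cpair a0 b0 c0 d0 D cI.

Lemma deriv_app L C s1 s2 : is_derivation L C s1 -> is_derivation L C s2 ->
  is_derivation L C (s1 ++ s2).
Proof.
  intros H1 H2 i Hi. rewrite length_app in Hi.
  destruct (Nat.lt_ge_cases i (length s1)) as [Hl|Hl].
  - rewrite app_nth1 by lia. destruct (H1 i Hl) as [H|[prem [concl [sg [? [? [? Hp]]]]]]].
    + now left.
    + right. exists prem, concl, sg. repeat split; auto. intros A HA.
      rewrite firstn_app. apply in_or_app. left. auto.
  - rewrite app_nth2 by lia. destruct (H2 (i - length s1) ltac:(lia)) as [H|[prem [concl [sg [? [? [? Hp]]]]]]].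
    + now left.
    + right. exists prem, concl, sg. repeat split; auto. intros A HA.
      rewrite firstn_app. apply in_or_app. right.
      replace (i - length s1) with (i - length s1) in Hp by lia. auto.
Qed.

Lemma deriv_snoc L C s c : is_derivation L C s ->
  ((exists A sg, In A (axioms C) /\ subst_ok L sg /\ c = subst sg A) \/
   (exists prem concl sg, In (prem, concl) (rules C) /\ subst_ok L sg /\
      c = subst sg concl /\ forall A, In A prem -> In (subst sg A) s)) ->
  is_derivation L C (s ++ [c]).
Proof.
  intros Hs Hc i Hi. rewrite length_app in Hi; simpl in Hi.
  destruct (Nat.lt_ge_cases i (length s)) as [Hl|Hl].
  - rewrite app_nth1 by lia. destruct (Hs i Hl) as [H|[prem [concl [sg [? [? [? Hp]]]]]]].
    + now left.
    + right. exists prem, concl, sg. repeat split; auto. intros A HA.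
      rewrite firstn_app. apply in_or_app. left. auto.
  - assert (i = length s) by lia. subst i. rewrite app_nth2 by lia.
    rewrite Nat.sub_diag. simpl.
    destruct Hc as [H|[prem [concl [sg [? [? [? Hp]]]]]]].
    + left. destruct H as [A [sg [? [? ?]]]]. exists A, sg. auto.
    + right. exists prem, concl, sg. repeat split; auto. intros A HA.
      rewrite firstn_app, firstn_all, Nat.sub_diag. simpl. rewrite app_nil_r. auto.
Qed.

Lemma thms_collect L C l : (forall F, In F l -> Thm L C F) ->
  exists s, is_derivation L C s /\ forall F, In F l -> In F s.
Proof.
  induction l as [|a l IH]; intros H.
  - exists []. split; [intros i Hi; simpl in Hi; lia | intros F []].
  - destruct IH as [s [Hs Hin]]. intros F HF; apply H; simpl; auto.
    destruct (H a (or_introl eq_refl)) as [s1 Hs1].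
    exists ((s1 ++ [a]) ++ s). split. apply deriv_app; auto.
    intros F [<-|HF]; apply in_or_app; [left; apply in_or_app; right; simpl; auto | right; auto].
Qed.

Lemma thm_axiom L C A sg : In A (axioms C) -> subst_ok L sg -> Thm L C (subst sg A).
Proof.
  intros HA Hsg. exists []. apply deriv_snoc. intros i Hi; simpl in Hi; lia.
  left. eauto.
Qed.

Lemma thm_rule L C prem concl sg : In (prem, concl) (rules C) -> subst_ok L sg ->
  (forall A, In A prem -> Thm L C (subst sg A)) -> Thm L C (subst sg concl).
Proof.
  intros HR Hsg Hp.
  destruct (thms_collect L C (map (subst sg) prem)) as [s [Hs Hin]].
  { intros F HF. apply in_map_iff in HF. destruct HF as [A [<- HA]]. auto. }
  exists s. apply deriv_snoc; auto. right. exists prem, concl, sg. repeat split; auto.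
  intros A HA. apply Hin. apply in_map; auto.
Qed.

Lemma deriv_inv L C (G : form -> Prop) :
  (forall A sg, In A (axioms C) -> G (subst sg A)) ->
  (forall prem concl sg, In (prem, concl) (rules C) ->
     (forall A, In A prem -> G (subst sg A)) -> G (subst sg concl)) ->
  forall F, Thm L C F -> G F.
Proof.
  intros Hax Hru F [s Hs].
  assert (Hall : forall i, i < length (s ++ [F]) -> G (nth i (s ++ [F]) (Var 0))).
  { intro i. induction i as [i IH] using lt_wf_ind. intro Hi.
    destruct (Hs i Hi) as [[A [sg [HA [_ ->]]]]|[prem [concl [sg [HR [_ [-> Hp]]]]]]].
    - auto.
    - apply (Hru prem concl sg HR). intros A HA.
      specialize (Hp A HA). apply In_nth with (d := Var 0) in Hp.
      destruct Hp as [j [Hj Hjn]]. rewrite length_firstn in Hj.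
      rewrite nth_firstn in Hjn. destruct (j <? i) eqn:E.
      + apply Nat.ltb_lt in E. rewrite <- Hjn. apply IH; lia.
      + apply Nat.ltb_ge in E. lia. }
  specialize (Hall (length s)). rewrite length_app, app_nth2, Nat.sub_diag in Hall by lia.
  apply Hall. simpl; lia.
Qed.

Lemma run_succ P k s : run P (S k) s = step P (run P k s).
Proof. revert s; induction k; intros s; simpl; auto. rewrite <- IHk. reflexivity. Qed.
Lemma run_add P a b s : run P (a + b) s = run P b (run P a s).
Proof. revert s; induction a; intros s; simpl; auto. Qed.
Lemma step_halted P s : halted P s -> step P s = s.
Proof.
  destruct s as [pc g]; unfold halted; simpl; intro H.
  assert (nth_error P pc = None) by (apply nth_error_None; auto). now rewrite H0.
Qed.
Lemma run_halted P k s : halted P s -> run P k s = s.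
Proof. revert s; induction k; intros s H; simpl; auto. rewrite step_halted; auto. Qed.
Lemma computes_det P n m1 m2 : computes P n m1 -> computes P n m2 -> m1 = m2.
Proof.
  intros [k1 [H1 E1]] [k2 [H2 E2]].
  set (s := (0, fun r => if Nat.eqb r 0 then n else 0)) in *.
  assert (run P (k1 + k2) s = run P k1 s) by (rewrite run_add; apply run_halted; auto).
  assert (run P (k2 + k1) s = run P k2 s) by (rewrite run_add; apply run_halted; auto).
  rewrite Nat.add_comm in H. rewrite H in H0. rewrite <- E1, <- E2, H0. reflexivity.
Qed.

Lemma good_prem {P sg} (prem : list form) :
  (forall A, In A prem -> good P (subst sg A)) -> Forall (fun A => good P (subst sg A)) prem.
Proof. intro H; apply Forall_forall; auto. Qed.

Ltac getprem H :=
  let HF := fresh "HF" in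
  pose proof (good_prem _ H) as HF; clear H; simpl in HF;
  repeat (rewrite Forall_cons_iff in HF; let h := fresh "h" in destruct HF as [h HF]);
  clear HF.

Lemma tri_step n : n * (n + 1) / 2 + S n = S n * (S n + 1) / 2.
Proof.
  replace (S n * (S n + 1)) with (n * (n + 1) + S n * 2) by lia.
  rewrite Nat.div_add by lia. reflexivity.
Qed.

Lemma R_bound P pc ins : nth_error P pc = Some ins -> ireg ins < R P.
Proof.
  intro H. apply nth_error_In in H. unfold R.
  induction P as [|a P IH]; simpl in *; [tauto|].
  destruct H as [<-|H]; [lia|]. specialize (IH H). lia.
Qed.

Lemma val_patf P f sg j : j < R P -> rnth (subst sg (patf P f)) j = subst sg (f j).
Proof.
  intro Hj. unfold patf. rewrite subst_regs, rnth_regs, map_map.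
  apply (nth_map_seq (fun x => subst sg (f x))); auto.
Qed.

Lemma subst_D P sg : subst sg (D P) = D P.
Proof. rewrite D_eq. cbn [subst]. rewrite !subst_num. reflexivity. Qed.

Lemma ax_good P A sg : In A (axioms (C0 P)) -> good P (subst sg A).
Proof.
  simpl. intros [<-|[<-|[<-|[<-|[<-|[]]]]]].
  - rewrite subst_D. rewrite D_eq at 1. cbn [good]. apply eq_sym, D_eq.
  - simpl. reflexivity.
  - simpl. reflexivity.
  - simpl. reflexivity.
  - simpl. rewrite subst_iter, val_iter. lia.
Qed.
Lemma instr_good P prem concl sg : In (prem, concl) (instr_rules P) ->
  (forall A, In A prem -> good P (subst sg A)) -> good P (subst sg concl).
Proof.
  unfold instr_rules. rewrite in_flat_map. intros [i [_ Hin]] H.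
  pose proof (R_bound P i) as Hb.
  unfold irules in Hin. destruct (nth_error P i) as [[r|r j]|] eqn:Hn; simpl in Hin;
  [specialize (Hb _ eq_refl); cbn [ireg] in Hb ..| destruct Hin].
  - destruct Hin as [[= <- <-]|[]]. getprem H. unfold fst_ in *. cbn [subst good] in *.
    rewrite !subst_num, !val_num in *.
    destruct h as [k [Hpc Hr]]. exists (S k). rewrite run_succ.
    destruct (run P k (st0 (cI P))) as [pc g]. cbn [fst snd] in Hpc, Hr |- *. subst pc.
    unfold step. rewrite Hn. cbn [fst snd]. split; [rewrite <- ?num_S, ?subst_num, ?val_num; reflexivity|].
    intros j' Hj'. unfold pat_inc. rewrite val_patf by auto.
    unfold upd. destruct (j' =? r) eqn:E.
    + apply Nat.eqb_eq in E. subst j'. rewrite Hr by auto. unfold pat_id, V.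
      rewrite val_patf by auto. reflexivity.
    + rewrite Hr by auto. unfold pat_id. rewrite val_patf by auto. reflexivity.
  - destruct Hin as [[= <- <-]|[[= <- <-]|[]]]; getprem H; unfold fst_ in *; cbn [subst good] in *;
    rewrite !subst_num, !val_num in *;
    destruct h as [k [Hpc Hr]]; exists (S k); rewrite run_succ;
    destruct (run P k (st0 (cI P))) as [pc g]; cbn [fst snd] in Hpc, Hr |- *; subst pc;
    unfold step; rewrite Hn.
    + assert (Hz : g r = 0).
      { rewrite Hr by auto. unfold pat_z. rewrite val_patf by auto. rewrite Nat.eqb_refl. reflexivity. }
      rewrite Hz. cbn [fst snd]. split; [rewrite <- ?num_S, ?subst_num, ?val_num; reflexivity|exact Hr].
    + assert (Hz : g r = S (val (sg r))).
      { rewrite Hr by auto. unfold pat_inc. rewrite val_patf by auto. rewrite Nat.eqb_refl. reflexivity. }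
      rewrite Hz. cbn [fst snd]. split; [rewrite <- ?num_S, ?subst_num, ?val_num; reflexivity|].
      intros j' Hj'. unfold pat_id. rewrite val_patf by auto. unfold upd.
      destruct (j' =? r) eqn:E.
      * apply Nat.eqb_eq in E; subst; reflexivity.
      * rewrite Hr by auto. unfold pat_inc. rewrite val_patf by auto. rewrite E. reflexivity.
Qed.
Lemma rule_good P prem concl sg : In (prem, concl) (crules P) ->
  (forall A, In A prem -> good P (subst sg A)) -> good P (subst sg concl).
Proof.
  intros Hin H. unfold crules in Hin. cbn [In] in Hin.
  destruct Hin as [E|[E|[E|[E|[E|[E|Hin]]]]]].
  - unfold r_add in E; injection E as <- <-. getprem H. unfold fadd, ftri, fcp, fnc, fdata, fst_, fhlt, fbad, sc, V, z in *. cbn [subst good val] in *. lia.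
  - unfold r_tri in E; injection E as <- <-. getprem H. unfold fadd, ftri, fcp, fnc, fdata, fst_, fhlt, fbad, sc, V, z in *. cbn [subst good val] in *.
    rewrite <- h0, h, tri_step. reflexivity.
  - unfold r_cp in E; injection E as <- <-. getprem H. unfold fadd, ftri, fcp, fnc, fdata, fst_, fhlt, fbad, sc, V, z in *. cbn [subst good val] in *.
    rewrite cpair_def. rewrite <- h1, h0, <- h. reflexivity.
  - unfold r_nc in E; injection E as <- <-. getprem H. unfold fadd, ftri, fcp, fnc, fdata, fst_, fhlt, fbad, sc, V, z in *. cbn [subst good val] in *.
    rewrite h1, h0, h, code_form_App. reflexivity.
  - unfold r_start in E; injection E as <- <-. unfold start_prem in H. getprem H.
    unfold fadd, ftri, fcp, fnc, fdata, fst_, fhlt, fbad, V in *. cbn [subst good] in *.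
    rewrite D_eq in h.
    pose proof (f_equal (nth_arg 0) h) as E0; pose proof (f_equal (nth_arg 1) h) as E1;
    pose proof (f_equal (nth_arg 2) h) as E2; pose proof (f_equal (nth_arg 3) h) as E3;
    cbn [nth_arg nth] in E0, E1, E2, E3. clear h.
    rewrite E0, E1, E2, E3 in *. cbn [subst val sc z] in *.
    assert (Hv : val (sg 16) = cI P).
    { rewrite cI_eq, code_D, h12, h11, h10, h9, h8, h7, h6, h5, h4, h3, h2, h1, h0, !val_num.
      reflexivity. }
    exists 0. cbn [run fst snd st0]. split; [reflexivity|]. intros i Hi.
    change (rcons (Var 16) (regs_of ?l)) with (regs_of (Var 16 :: l)).
    rewrite subst_regs, rnth_regs. destruct i as [|i]; cbn [map nth subst].
    + rewrite Hv. reflexivity.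
    + rewrite map_repeat. cbn [subst]. fold z. rewrite nth_repeat. reflexivity.
  - unfold r_bad in E; injection E as <- <-. getprem H.
    unfold fadd, ftri, fcp, fnc, fdata, fst_, fhlt, fbad, V in *. cbn [subst good] in *.
    destruct h as [k [H1 H2]]. exists k.
    change (halted P (run P k (st0 (cI P))) /\ snd (run P k (st0 (cI P))) 0 = 1).
    split. { unfold halted. lia. }
    rewrite H2 by (unfold R; lia). reflexivity.
  - eapply instr_good; eauto.
Qed.

Lemma wf_num n : wf_form L0 (num n).
Proof. induction n; simpl; repeat split; auto; lia. Qed.
Lemma wf_iter n t : wf_form L0 t -> wf_form L0 (Nat.iter n sc t).
Proof. intro Ht; induction n; simpl; auto. repeat split; auto; lia. Qed.
Lemma wf_regs l : (forall x, In x l -> wf_form L0 x) -> wf_form L0 (regs_of l).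
Proof.
  induction l; intro H; simpl; [repeat split; auto; lia|].
  repeat split; try lia; [apply H; simpl; auto| apply IHl; intros; apply H; simpl; auto].
Qed.
Lemma wf_patf P f : (forall j, wf_form L0 (f j)) -> wf_form L0 (patf P f).
Proof.
  intro H; unfold patf. apply wf_regs. intros x Hx. apply in_map_iff in Hx.
  destruct Hx as [j [<- _]]. auto.
Qed.

Definition sgl (l : list form) : nat -> form := fun x => nth x l (Var 0).
Lemma sgl_ok l : (forall x, In x l -> wf_form L0 x) -> subst_ok L0 (sgl l).
Proof.
  intros H x. unfold sgl. destruct (Nat.lt_ge_cases x (length l)).
  - apply H, nth_In; auto.
  - rewrite nth_overflow by auto. simpl; auto.
Qed.
Lemma numf_ok h : subst_ok L0 (fun x => num (h x)).
Proof. intro; apply wf_num. Qed.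

Definition Th (P : program) F := Thm L0 (C0 P) F.

Lemma th_rule P prem concl sg F : In (prem, concl) (crules P) -> subst_ok L0 sg ->
  (forall A, In A prem -> Th P (subst sg A)) -> subst sg concl = F -> Th P F.
Proof. intros. subst F. eapply thm_rule; eauto. Qed.
Lemma th_ax P A sg F : In A (axioms (C0 P)) -> subst_ok L0 sg -> subst sg A = F -> Th P F.
Proof. intros. subst F. eapply thm_axiom; eauto. Qed.

Ltac wfl := let x := fresh in let Hx := fresh in intros x Hx; simpl in Hx;
  repeat (destruct Hx as [<-|Hx]; [apply wf_num|]); destruct Hx.

Ltac inax n := unfold C0; cbn [axioms]; do n (apply in_cons); apply in_eq.
Ltac inru n := unfold crules; do n (apply in_cons); apply in_eq.

Lemma th_add P a b : Th P (fadd (num a) (num b) (num (a + b))).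
Proof.
  induction a.
  - eapply th_ax with (sg := fun _ => num b). inax ltac:(1). apply numf_ok. reflexivity.
  - eapply th_rule with (sg := sgl [num a; num b; num (a + b)]).
    inru ltac:(0). apply sgl_ok; wfl.
    intros A [<-|[]]. exact IHa. reflexivity.
Qed.

Lemma th_tri P n : Th P (ftri (num n) (num (n * (n + 1) / 2))).
Proof.
  induction n.
  - eapply th_ax with (sg := fun _ => num 0). inax ltac:(2). apply numf_ok. reflexivity.
  - rewrite <- tri_step.
    eapply th_rule with (sg := sgl [num n; num (n * (n + 1) / 2); num (n * (n + 1) / 2 + S n)]).
    inru ltac:(1). apply sgl_ok; wfl.
    intros A [<-|[<-|[]]]. exact IHn. apply (th_add P _ (S n)). reflexivity.
Qed.

Lemma th_cp P a b : Th P (fcp (num a) (num b) (num (cpair a b))).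
Proof.
  rewrite cpair_def.
  eapply th_rule with (sg := sgl [num a; num b; num (a + b); num ((a + b) * (a + b + 1) / 2);
                                  num ((a + b) * (a + b + 1) / 2 + b)]).
  inru ltac:(2). apply sgl_ok; wfl.
  intros A [<-|[<-|[<-|[]]]]. apply th_add. apply th_tri. apply th_add. reflexivity.
Qed.

Lemma th_nc P n : Th P (fnc (num n) (num (code_form (num n)))).
Proof.
  induction n.
  - eapply th_ax with (sg := fun _ => num 0). inax ltac:(3). apply numf_ok. reflexivity.
  - rewrite num_S. unfold sc at 2. rewrite code_form_App.
    set (c := code_form (num n)) in *.
    eapply th_rule with (sg := sgl [num n; num c; num (cpair c 0); num (cpair 2 (S (cpair c 0)))]).
    inru ltac:(3). apply sgl_ok; wfl.
    intros A [<-|[<-|[<-|[]]]]. exact IHn. apply (th_cp P c 0). apply (th_cp P 2 (S _)).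
    reflexivity.
Qed.



Definition stt P pc (g : nat -> nat) := fst_ (num pc) (regs_of (map (fun j => num (g j)) (seq 0 (R P)))).

Lemma subst_patf sg P f : subst sg (patf P f) = regs_of (map (fun j => subst sg (f j)) (seq 0 (R P))).
Proof. unfold patf. rewrite subst_regs, map_map. reflexivity. Qed.

Lemma iter_num a b : Nat.iter a sc (num b) = num (a + b).
Proof. induction a; simpl; auto. rewrite IHa. reflexivity. Qed.

Lemma in_instr P i rl : nth_error P i <> None -> In rl (irules P i) -> In rl (crules P).
Proof.
  intros Hn Hin. unfold crules. do 6 apply in_cons. unfold instr_rules.
  apply in_flat_map. exists i. split; auto. apply in_seq. split; [lia|].
  apply nth_error_Some in Hn. lia.
Qed.

Lemma th_start P : Th P (stt P 0 (snd (st0 (cI P)))).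
Proof.
  set (N := cI P).
  assert (Hn : forall n, Th P (fnc (num n) (num (code_form (num n))))) by apply th_nc.
  set (ca := code_form (num a0)). set (cb := code_form (num (b0 P))).
  set (cc := code_form (num (c0 P))). set (ce := code_form (num d0)).
  set (t1 := cpair ce 0). set (t2 := cpair cc (S t1)). set (t3 := cpair cb (S t2)).
  set (t4 := cpair ca (S t3)). set (h := cpair 9 (S t4)). set (t5 := cpair h (b0 P)).
  set (t6 := cpair (S t5) (c0 P)). set (t7 := cpair t6 d0).
  assert (HN : N = cpair a0 t7).
  { unfold N. rewrite cI_eq, code_D. reflexivity. }
  eapply th_rule with (sg := sgl [num a0; num (b0 P); num (c0 P); num d0;
     num ca; num cb; num cc; num ce; num t1; num t2; num t3; num t4; num h; num t5;
     num t6; num t7; num N]).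
  - inru ltac:(4).
  - apply sgl_ok. intros x Hx. simpl in Hx.
    repeat (destruct Hx as [<-|Hx]; [apply wf_num|]); destruct Hx.
  - intros A HA. unfold start_prem in HA. simpl In in HA.
    repeat destruct HA as [<-|HA]. all: try (exfalso; exact HA).
    all: unfold fdata, fcp, fnc, V, sc; cbn [subst sgl nth].
    + rewrite <- D_eq. eapply th_ax with (sg := sgl []). inax ltac:(0).
      apply sgl_ok; intros ? []. apply subst_D.
    + apply Hn. + apply Hn. + apply Hn. + apply Hn.
    + apply (th_cp P ce 0).
    + apply (th_cp P cc (S t1)).
    + apply (th_cp P cb (S t2)).
    + apply (th_cp P ca (S t3)).
    + apply (th_cp P 9 (S t4)).
    + apply (th_cp P h (b0 P)).
    + apply (th_cp P (S t5) (c0 P)).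
    + apply (th_cp P t6 d0).
    + rewrite HN. apply (th_cp P a0 t7).
  - unfold stt, r_start, fst_. cbn [subst sgl nth]. rewrite subst_regs. unfold R.
    set (m := fold_right (fun (ins : instr) (m : nat) => Nat.max (ireg ins) m) 0 P).
    replace (S m - 1) with m by lia. cbn [seq map subst sgl nth V].
    rewrite map_repeat. cbn [subst].
    rewrite (map_ext_in _ (fun _ => z)).
    + rewrite map_const, length_seq. reflexivity.
    + intros j Hj. apply in_seq in Hj. unfold st0; cbn [snd].
      destruct j; [lia|]. reflexivity.
Qed.

Lemma th_eq P F F' : Th P F -> F = F' -> Th P F'.
Proof. intros H <-; exact H. Qed.

Lemma th_run P k : Th P (stt P (fst (run P k (st0 (cI P)))) (snd (run P k (st0 (cI P))))).
Proof.
  induction k as [|k IH]. { exact (th_start P). }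
  rewrite run_succ. destruct (run P k (st0 (cI P))) as [pc g]. cbn [fst snd] in IH.
  unfold step. destruct (nth_error P pc) as [[r|r j]|] eqn:Hn.
  - eapply th_rule with (sg := fun x => num (g x)).
    + apply (in_instr P pc); [rewrite Hn; discriminate|]. unfold irules; rewrite Hn; apply in_eq.
    + apply numf_ok.
    + intros A [<-|[]]. eapply th_eq; [exact IH|].
      unfold stt, fst_, pat_id; cbn [subst]. rewrite subst_num, subst_patf. reflexivity.
    + unfold stt, fst_, pat_inc; cbn [subst fst snd]. rewrite subst_num, subst_patf.
      apply (f_equal (fun l => App 9 [_; regs_of l])). apply map_ext_in. intros x Hx. unfold upd.
      destruct (x =? r) eqn:E; [apply Nat.eqb_eq in E; subst; reflexivity| reflexivity].
  - destruct (g r) as [|m] eqn:Hg.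
    + eapply th_rule with (sg := fun x => num (g x)).
      * apply (in_instr P pc); [rewrite Hn; discriminate|]. unfold irules; rewrite Hn; apply in_eq.
      * apply numf_ok.
      * intros A [<-|[]]. eapply th_eq; [exact IH|].
        unfold stt, fst_, pat_z; cbn [subst]. rewrite subst_num, subst_patf.
        apply (f_equal (fun l => App 9 [_; regs_of l])). apply map_ext_in. intros x Hx.
        destruct (x =? r) eqn:E; [apply Nat.eqb_eq in E; subst; rewrite Hg; reflexivity| reflexivity].
      * unfold stt, fst_, pat_z; cbn [subst fst snd]. rewrite subst_num, subst_patf.
        apply (f_equal (fun l => App 9 [_; regs_of l])). apply map_ext_in. intros x Hx.
        destruct (x =? r) eqn:E; [apply Nat.eqb_eq in E; subst; rewrite Hg; reflexivity| reflexivity].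
    + eapply th_rule with (sg := fun x => num (upd g r m x)).
      * apply (in_instr P pc); [rewrite Hn; discriminate|]. unfold irules; rewrite Hn; apply in_cons, in_eq.
      * apply numf_ok.
      * intros A [<-|[]]. eapply th_eq; [exact IH|].
        unfold stt, fst_, pat_inc; cbn [subst]. rewrite subst_num, subst_patf.
        apply (f_equal (fun l => App 9 [_; regs_of l])). apply map_ext_in. intros x Hx. unfold upd.
        destruct (x =? r) eqn:E; [apply Nat.eqb_eq in E; subst; rewrite Hg; unfold sc, V; cbn [subst]; rewrite Nat.eqb_refl; reflexivity| unfold V; cbn [subst]; rewrite E; reflexivity].
      * unfold stt, fst_, pat_id; cbn [subst fst snd]. rewrite subst_num, subst_patf. reflexivity.
  - exact IH.
Qed.

Lemma th_bad P : computes P (cI P) 1 -> Th P fbad.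
Proof.
  intros [k [Hh H1]]. pose proof (th_run P k) as Hr.
  change (0, fun r => if r =? 0 then cI P else 0) with (st0 (cI P)) in Hh, H1.
  destruct (run P k (st0 (cI P))) as [pc g]. unfold halted in Hh. cbn [fst snd] in Hh, H1, Hr.
  unfold stt, R in Hr.
  set (m := fold_right (fun (ins : instr) (m : nat) => Nat.max (ireg ins) m) 0 P) in Hr.
  eapply th_rule with (sg := sgl [num pc; regs_of (map (fun j => num (g j)) (seq 1 m))]).
  - inru ltac:(5).
  - apply sgl_ok. intros x [<-|[<-|[]]]. apply wf_num. apply wf_regs.
    intros y Hy. apply in_map_iff in Hy. destruct Hy as [j [<- _]]. apply wf_num.
  - intros A [<-|[<-|[]]].
    + eapply th_eq; [exact Hr|]. unfold fst_, rcons, sc, V; cbn [subst sgl nth seq map regs_of fold_right].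
      rewrite H1. reflexivity.
    + eapply th_ax with (sg := fun _ => num (pc - length P)).
      * inax ltac:(4).
      * apply numf_ok.
      * unfold fhlt, V; cbn [subst sgl nth]. rewrite subst_iter. cbn [subst].
        rewrite iter_num. do 3 f_equal. lia.
  - reflexivity.
Qed.
Ltac wfgo := repeat (match goal with
 | |- wf_form L0 (num _) => apply wf_num
 | |- wf_form L0 (Nat.iter _ _ _) => apply wf_iter
 | |- wf_form L0 (patf _ _) => apply wf_patf; intro
 | |- wf_form L0 (if ?b then _ else _) => destruct b
 | |- wf_form L0 (regs_of (map _ _)) => apply wf_regs; let x := fresh in let Hx := fresh in
      intros x Hx; apply in_map_iff in Hx; destruct Hx as [? [<- _]]
 | |- wf_form L0 (Var _) => exact I
 | |- wf_form L0 (App _ _) => progress (simpl; repeat split; try lia)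
 | |- _ /\ _ => split
 | |- True => exact I
 | |- _ < length L0 => cbn; lia
 end).

Lemma wf_data a b c d : wf_form L0 (App 8 [num a; num b; num c; num d]).
Proof. simpl. repeat split; try lia; apply wf_num. Qed.

Lemma wf_C P : wf_calculus L0 (C0 P).
Proof.
  split.
  - intros A HA. cbn [axioms C0] in HA.
    destruct HA as [<-|[<-|[<-|[<-|[<-|[]]]]]]; [rewrite D_eq; apply wf_data|..];
    unfold fadd, ftri, fcp, fnc, fdata, fst_, fhlt, fbad, sc, V, z, rcons, others in *; wfgo.
  - intros prem concl HR. change (Defs.rules (C0 P)) with (crules P) in HR. unfold crules in HR. cbn [In] in HR.
    destruct HR as [E|[E|[E|[E|[E|[E|Hin]]]]]].
    1-6: unfold r_add, r_tri, r_cp, r_nc, r_start, r_bad in E; injection E as <- <-; split;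
      [|intros A HA; unfold start_prem in HA; simpl In in HA; repeat destruct HA as [<-|HA];
        try (exfalso; exact HA)];
      unfold fadd, ftri, fcp, fnc, fdata, fst_, fhlt, fbad, sc, V, z, rcons in *; wfgo.
    + apply wf_regs. intros x Hx. apply repeat_spec in Hx; subst; wfgo.
    + unfold instr_rules in Hin. apply in_flat_map in Hin. destruct Hin as [i [_ Hin]].
      unfold irules in Hin. destruct (nth_error P i) as [[r|r j]|]; simpl in Hin;
      repeat destruct Hin as [E|Hin]; try (exfalso; exact Hin);
      injection E as <- <-; (split; [|intros A HA; simpl In in HA; repeat destruct HA as [<-|HA];
        try (exfalso; exact HA)]);
      unfold fst_, pat_id, pat_inc, pat_z, sc, V, z in *; wfgo.
Qed.

Lemma wf_M : wf_fvlogic L0 M0.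
Proof.
  unfold wf_fvlogic. cbn [nvals desig tables M0]. split; [lia|]. split.
  { intros d [<-|[]]; lia. } split; [reflexivity|].
  intros k Hk. cbn in Hk.
  do 12 (destruct k as [|k]; [cbn; split; [reflexivity|intros y Hy;
     first [apply repeat_spec in Hy; lia | destruct Hy as [<-|[]]; lia]]|]).
  lia.
Qed.

Lemma tables_zero k i : k <> 11 -> nth i (nth k (tables M0) []) 0 = 0.
Proof.
  intro Hk. cbn [tables M0].
  do 11 (destruct k as [|k]; [cbn [nth]; apply nth_repeat|]).
  destruct k as [|k]; [lia|]. destruct k; destruct i; reflexivity.
Qed.

Theorem proposition3 :
  ~ exists P : program,
      forall (L : language) (C : calculus) (M : fvlogic),
        wf_calculus L C -> wf_fvlogic L M ->
        exists b : bool,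
          computes P (code_instance L C M) (if b then 1 else 0) /\
          (b = true <-> weakly_sound L C M).
Proof.
  intros [P HP].
  destruct (HP L0 (C0 P) M0 (wf_C P) wf_M) as [b [Hc Hiff]].
  rewrite <- cI_def in Hc.
  destruct b.
  - assert (Hws : weakly_sound L0 (C0 P) M0) by (apply Hiff; reflexivity).
    pose proof (th_bad P Hc) as Hb.
    specialize (Hws _ Hb (fun _ => 0) (fun _ => ltac:(cbn; lia))).
    cbn in Hws. destruct Hws as [H|[]]. discriminate.
  - assert (Hws : weakly_sound L0 (C0 P) M0).
    { intros F HF v Hv.
      pose proof (deriv_inv L0 (C0 P) (good P) (fun A sg HA => ax_good P A sg HA)
                    (fun prem concl sg HR HA => rule_good P prem concl sg HR HA) F HF) as Hg.
      destruct F as [x|k args]; [exact (False_ind _ Hg)|].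
      destruct (Nat.eq_dec k 11) as [->|Hk].
      - cbn in Hg. pose proof (computes_det _ _ _ _ Hc Hg). discriminate.
      - cbn [eval]. rewrite tables_zero by auto. left. reflexivity. }
    apply Hiff in Hws. discriminate.
Qed.
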